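(* For any incentive-compatible selection mechanism $\mathcal{M}$ on directed forests, $Q(\mathcal{M})\le 4/5$.
   Context: Let $N$ be a finite set of $n$ vertices. A directed forest on $N$ is a directed acyclic graph on $N$ with every out-degree at most $1$; $\mathcal{F}^N$ is the set of such forests. $P(x;F)$ is the progeny of $x$ (number of vertices with a directed path to $x$, including $x$), $P^*(F)=\max_xP(x;F)$. A selection mechanism is a family (one for each $n$) of functions $\mathcal{M}:N\times\mathcal{F}^N\to[0,1]$ with $\sum_x\mathcal{M}(x;F)\le1$. It is incentive-compatible if $\mathcal{M}(x;F)=\mathcal{M}(x;F')$ whenever $F,F'$ differ only in the out-edge of $x$. Quality: $Q(\mathcal{M};F)=\sum_x\mathcal{M}(x;F)P(x;F)/P^*(F)$ and $Q(\mathcal{M})=\lim_{|N|\to\infty}\min_{F\in\mathcal{F}^N}Q(\mathcal{M};F)$. *)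

(* Defs.v *)
From HB Require Import structures.
From mathcomp Require Import all_boot all_order all_algebra.
From mathcomp Require Import reals.
Set Implicit Arguments. Unset Strict Implicit. Unset Printing Implicit Defensive.
Import Order.TTheory GRing.Theory Num.Theory.
Local Open Scope ring_scope.

(* Vertex set N = 'I_n.  A graph with every out-degree at most 1 is given by
   its (optional) out-neighbour map: the edge x -> y exists iff g x = Some y. *)
Definition graph (n : nat) := {ffun 'I_n -> option 'I_n}.

Definition walk n (g : graph n) (k : nat) (y : 'I_n) : option 'I_n :=
  iter k (fun o => obind g o) (Some y).

(* acyclic: no directed cycle.  Any cycle in an n-vertex graph has length
   at most n, so checking lengths 1..n is exhaustive. *)
Definition is_forest n (g : graph n) : bool :=
  [forall x : 'I_n, forall k : 'I_n.+1, (0 < k)%N ==> (walk g k x != Some x)].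

(* there is a directed path (possibly empty) from y to x; in a forest such a
   path has length < n, so bounding lengths by n is exhaustive. *)
Definition reaches n (g : graph n) (y x : 'I_n) : bool :=
  [exists k : 'I_n.+1, walk g k y == Some x].

Definition progeny n (g : graph n) (x : 'I_n) : nat := #|[set y | reaches g y x]|.
Definition max_progeny n (g : graph n) : nat := \max_(x : 'I_n) progeny g x.

(* A family of functions M_n : N x F^N -> R, one for each n.  Values on
   non-forests are irrelevant (all conditions below quantify over forests). *)
Definition mechanism (R : realType) := forall n : nat, 'I_n -> graph n -> R.

Definition is_selection_mechanism (R : realType) (M : mechanism R) : Prop :=
  forall n (g : graph n), is_forest g ->
    (forall x, 0 <= M n x g <= 1) /\ \sum_(x : 'I_n) M n x g <= 1.

Definition differ_only_at n (x : 'I_n) (g g' : graph n) : Prop :=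
  forall y, y != x -> g y = g' y.

Definition incentive_compatible (R : realType) (M : mechanism R) : Prop :=
  forall n (x : 'I_n) (g g' : graph n), is_forest g -> is_forest g' ->
    differ_only_at x g g' -> M n x g = M n x g'.

Definition quality (R : realType) (M : mechanism R) n (g : graph n) : R :=
  \sum_(x : 'I_n) M n x g * (progeny g x)%:R / (max_progeny g)%:R.

(* The set of forests is finite and nonempty (the
   empty forest); for a selection mechanism Q(M;F) <= 1, so the top element 1
   used as neutral element does not affect the minimum. *)
Definition min_quality (R : realType) (M : mechanism R) (n : nat) : R :=
  \big[Num.min/1]_(g : graph n | is_forest g) quality M g.

Definition converges_to (R : realType) (u : nat -> R) (l : R) : Prop :=
  forall eps : R, 0 < eps -> exists N : nat, forall n, (N <= n)%N -> `|u n - l| < eps.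

(* Main.v *)
Require Import Defs.
From HB Require Import structures.
From mathcomp Require Import all_boot all_order all_algebra.
From mathcomp Require Import reals.
From mathcomp Require Import zify ring lra.
Import Order.TTheory GRing.Theory Num.Theory.
Local Open Scope ring_scope.

Lemma walkS n (g : graph n) k u :
  walk g k.+1 u = if g u is Some w then walk g k w else None.
Proof.
rewrite /walk iterSr /=; case: (g u) => // .
by elim: k => //= k ->.
Qed.

Lemma walk_mono n (g : graph n) (Hg : forall u w, g u = Some w -> (u < w)%N) k :
  forall u v, walk g k u = Some v -> (u + k <= v)%N.
Proof.
elim: k => [|k IH] u v.
  by rewrite /walk /= => -[->]; rewrite addn0.
rewrite walkS; case E: (g u) => [w|] // /IH; have := Hg _ _ E; lia.
Qed.

Lemma walk_anc n (g : graph n) (A : pred 'I_n) v : v \in A ->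
  (forall u w, g u = Some w -> w \in A -> u \in A) ->
  forall k u, walk g k u = Some v -> u \in A.
Proof.
move=> Hv HA; elim => [|k IH] u.
  by rewrite /walk /= => -[->].
rewrite walkS; case E: (g u) => [w|] // /IH; exact: HA E.
Qed.

Lemma progeny_le n (g : graph n) (s : seq 'I_n) v : v \in s ->
  (forall u w, g u = Some w -> w \in s -> u \in s) ->
  (progeny g v <= size s)%N.
Proof.
move=> Hv HA; rewrite /progeny; apply: leq_trans (card_size s).
apply: subset_leq_card; apply/subsetP => u; rewrite inE => /existsP [k /eqP Hk].
exact: walk_anc Hk.
Qed.

Lemma progeny_ge n (g : graph n) (s : seq 'I_n) v : uniq s ->
  (forall u, u \in s -> reaches g u v) ->
  (size s <= progeny g v)%N.
Proof.
move=> Hu Hs; rewrite /progeny -(card_uniqP Hu).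
apply: subset_leq_card; apply/subsetP => u Hus; rewrite inE; exact: Hs.
Qed.

Lemma forest_mono n (g : graph n) :
  (forall u w, g u = Some w -> (u < w)%N) -> is_forest g.
Proof.
move=> Hg; apply/forallP => x; apply/forallP => k; apply/implyP => k0.
apply/eqP => /(@walk_mono _ _ Hg k); lia.
Qed.

Lemma quality_le (R : realType) (M : mechanism R) n (g : graph n) (b : 'I_n -> nat) p :
  (forall v, 0 <= M n v g) -> (forall v, progeny g v <= b v)%N ->
  (0 < p)%N -> (p <= max_progeny g)%N ->
  quality M g <= (\sum_v M n v g * (b v)%:R) / p%:R.
Proof.
move=> HM Hb Hp HP; rewrite /quality mulr_suml; apply: ler_sum => v _.
have Pp : 0 < (max_progeny g)%:R :> R by rewrite ltr0n; lia.
have pp : 0 < p%:R :> R by rewrite ltr0n.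
apply: (@le_trans _ _ (M n v g * (b v)%:R / (max_progeny g)%:R)).
  rewrite ler_pM2r ?invr_gt0 //; apply: ler_wpM2l => //; rewrite ler_nat; exact: Hb.
apply: ler_wpM2l; first by apply: mulr_ge0 => //; rewrite ler0n.
by rewrite lef_pV2 ?posrE // ler_nat.
Qed.

Arguments walk_mono {n g}.
Arguments walk_anc {n g}.
Arguments progeny_le {n g}.
Arguments progeny_ge {n g}.
Arguments forest_mono {n g}.
Arguments quality_le {R M n g b p}.

Lemma key (R : realType) (M : mechanism R) m :
  is_selection_mechanism M -> incentive_compatible M ->
  min_quality M m.+3 <= 4 / 5.
Proof.
move=> HS HIC.
pose a : 'I_m.+3 := Ordinal (isT : (0 < m.+3)%N).
pose b : 'I_m.+3 := Ordinal (isT : (1 < m.+3)%N).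
pose c : 'I_m.+3 := Ordinal (isT : (2 < m.+3)%N).
pose g1 : graph m.+3 := [ffun u => if u == a then Some b else None].
pose g2 : graph m.+3 := [ffun u => if u == a then Some b else if u == b then Some c else None].
have e1 : forall u w, g1 u = Some w -> (u < w)%N.
  by move=> u w; rewrite ffunE; case: eqP => // -> [<-].
have e2 : forall u w, g2 u = Some w -> (u < w)%N.
  by move=> u w; rewrite ffunE; case: eqP => [-> [<-]//|_]; case: eqP => // -> [<-].
have f1 := forest_mono e1.
have f2 := forest_mono e2.
have IC : M m.+3 b g1 = M m.+3 b g2.
  apply: HIC => // y yb; by rewrite !ffunE (negbTE yb).
pose b1 v := if v == b then 2%N else 1%N.
pose b2 v := if v == b then 2%N else if v == c then 3%N else 1%N.
have P1 : forall v, (progeny g1 v <= b1 v)%N.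
  move=> v; rewrite /b1; case: (eqVneq v b) => [->|vb].
    apply: (progeny_le [:: a; b]) => //= u w.
    by rewrite ffunE; case: eqP => [-> _ _|]; rewrite ?inE ?eqxx.
  apply: (progeny_le [:: v]); first by rewrite mem_seq1.
  move=> u w; rewrite ffunE; case: eqP => // _ [<-].
  by rewrite mem_seq1 eq_sym (negbTE vb).
have P2 : forall v, (progeny g2 v <= b2 v)%N.
  move=> v; rewrite /b2; case: (eqVneq v b) => [->|vb].
    apply: (progeny_le [:: a; b]) => //= u w.
    rewrite ffunE; case: eqP => [-> _ _|_]; rewrite ?inE ?eqxx //.
    by case: eqP => // _ [<-].
  case: (eqVneq v c) => [->|vc].
    apply: (progeny_le [:: a; b; c]) => //= u w.
    rewrite ffunE; case: eqP => [-> _ _|_]; rewrite ?inE ?eqxx //.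
    by case: eqP => [-> _ _|_]; rewrite ?inE ?eqxx ?orbT.
  apply: (progeny_le [:: v]); first by rewrite mem_seq1.
  move=> u w; rewrite ffunE; case: eqP => [_ [<-]|_].
    by rewrite mem_seq1 eq_sym (negbTE vb).
  case: eqP => // _ [<-].
  by rewrite mem_seq1 eq_sym (negbTE vc).
have Q1 : (2 <= max_progeny g1)%N.
  apply: leq_trans (leq_bigmax b).
  apply: (progeny_ge [:: a; b]) => // u; rewrite !inE => /orP [] /eqP ->;
    apply/existsP.
    by exists (Ordinal (isT : (1 < m.+4)%N)); rewrite /walk /= ffunE eqxx.
  by exists (Ordinal (isT : (0 < m.+4)%N)); rewrite /walk /=.
have Q2 : (3 <= max_progeny g2)%N.
  apply: leq_trans (leq_bigmax c).
  apply: (progeny_ge [:: a; b; c]) => // u; rewrite !inE => /orP [/eqP ->|/orP [] /eqP ->];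
    apply/existsP.
  - by exists (Ordinal (isT : (2 < m.+4)%N)); rewrite /walk /= ffunE eqxx /= ffunE.
  - by exists (Ordinal (isT : (1 < m.+4)%N)); rewrite /walk /= !ffunE.
  - by exists (Ordinal (isT : (0 < m.+4)%N)); rewrite /walk /=.
have [H1 S1] := HS _ _ f1.
have [H2 S2] := HS _ _ f2.
have M1 : forall v, 0 <= M m.+3 v g1 by move=> v; case/andP: (H1 v).
have M2 : forall v, 0 <= M m.+3 v g2 by move=> v; case/andP: (H2 v).
have qb1 := quality_le M1 P1 (isT : (0 < 2)%N) Q1.
have qb2 := quality_le M2 P2 (isT : (0 < 3)%N) Q2.
have mq : forall g : graph m.+3, is_forest g -> min_quality M m.+3 <= quality M g.
  move=> g fg; rewrite /min_quality (bigD1 g) //=; by rewrite ge_min lexx.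
have T1 : \sum_v M m.+3 v g1 * (b1 v)%:R = M m.+3 b g1 + \sum_v M m.+3 v g1.
  rewrite (bigD1 b) //= [X in _ = _ + X](bigD1 b) //= /b1 eqxx.
  rewrite (eq_bigr (fun v => M m.+3 v g1)) => [|v /negbTE ->]; last by rewrite mulr1.
  rewrite addrA; congr (_ + _); rewrite -mulr2n; by rewrite mulr_natr.
have T2 : \sum_v M m.+3 v g2 * (b2 v)%:R =
   2 * M m.+3 b g2 + 3 * M m.+3 c g2 + \sum_(v | (v != b) && (v != c)) M m.+3 v g2.
  rewrite (bigD1 b) //= (bigD1 c) //= /b2 eqxx /=.
  rewrite (eq_bigr (fun v => M m.+3 v g2)) => [|v /andP [/negbTE -> /negbTE ->]]; last by rewrite mulr1.
  by rewrite addrA mulrC [_ * 3%:R]mulrC.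
have T2' : \sum_v M m.+3 v g2 =
   M m.+3 b g2 + M m.+3 c g2 + \sum_(v | (v != b) && (v != c)) M m.+3 v g2.
  by rewrite (bigD1 b) //= (bigD1 c) //= addrA.
have Sg : 0 <= \sum_(v | (v != b) && (v != c)) M m.+3 v g2 by apply: sumr_ge0.
have Mc : 0 <= M m.+3 c g2 by [].
case: (lerP (M m.+3 b g1) (3/5)) => Hb.
  apply: le_trans (mq _ f1) _; apply: le_trans qb1 _; rewrite T1.
  rewrite ler_pdivrMr //; lra.
apply: le_trans (mq _ f2) _; apply: le_trans qb2 _; rewrite T2.
rewrite ler_pdivrMr //; rewrite -IC in T2' *; lra.
Qed.

Theorem proposition1 (R : realType) (M : mechanism R) (q : R) :
  is_selection_mechanism M -> incentive_compatible M ->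
  converges_to (min_quality M) q ->
  q <= 4 / 5.
Proof.
move=> HS HIC Hc; rewrite leNgt; apply/negP => Hq.
have e : 0 < q - 4 / 5 by rewrite subr_gt0.
have [N HN] := Hc _ e.
have H1 := HN N.+3 (leq_trans (leqnSn N) (leq_trans (leqnSn _) (leqnSn _))).
have H2 := @key R M N HS HIC.
have h := ler_norm (q - min_quality M N.+3); rewrite distrC in h.
lra.
Qed.
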